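(* Consider the system $$\frac{df}{dt}= r\alpha f m(1-f-m)-(1+h)f,\qquad \frac{dm}{dt}=(1-r)\alpha f m(1-f-m)+(s-1)m,$$ with $0<r<1$, $\alpha>0$, $h\ge 0$, $0\le s<1$. Set $\mu=\frac{(1-r)(1+h)}{r(1-s)}$ and define $$s^*=\frac{1}{r}+\frac{1-r}{4}\Big(\frac{4h}{r}-\alpha\Big),\qquad h_*=\frac{r}{4}\Big(\alpha-\frac{4}{r(1-r)}\Big),\qquad h^*=\frac{r}{4}\Big(\alpha-\frac{4}{r}\Big).$$ The interior equilibria of the system are $E_i^*=(f_i^*,\mu f_i^* )$, $i=1,2$, with $$f^*_{1,2}=\frac{1}{2(1+\mu)}\left\{1\pm\sqrt{1-\frac{4(1+\mu)(1+h)}{r\alpha\mu}}\right\},$$ and these interior equilibria exist (are real and positive) if either (i) $s\ge s^*$ and $h_*<h<h^*$, or (ii) $0\le h\le h_*$ and $\alpha>\frac{4}{r(1-r)}$.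
   Context: This is the nondimensionalized female-harvesting male-stocking (FHMS) mating model without Allee effect: $f,m\ge 0$ are scaled female and male population densities, $r$ is the primary sex ratio, $\alpha$ the scaled reproduction rate, $h$ the scaled female harvesting rate and $s$ the scaled male stocking rate. An interior equilibrium is an equilibrium with $f>0$, $m>0$. *)

(* Defs.v *)
From Stdlib Require Import Reals Lra.
Open Scope R_scope.

Definition fhms_df (r alpha h s f m : R) : R :=
  r * alpha * f * m * (1 - f - m) - (1 + h) * f.
Definition fhms_dm (r alpha h s f m : R) : R :=
  (1 - r) * alpha * f * m * (1 - f - m) + (s - 1) * m.

Definition is_equilibrium (r alpha h s f m : R) : Prop :=
  fhms_df r alpha h s f m = 0 /\ fhms_dm r alpha h s f m = 0.

Definition is_interior_equilibrium (r alpha h s f m : R) : Prop :=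
  0 < f /\ 0 < m /\ is_equilibrium r alpha h s f m.

Definition fhms_mu (r h s : R) : R := (1 - r) * (1 + h) / (r * (1 - s)).
Definition s_star (r alpha h : R) : R := 1 / r + (1 - r) / 4 * (4 * h / r - alpha).
Definition h_low (r alpha : R) : R := r / 4 * (alpha - 4 / (r * (1 - r))).
Definition h_up (r alpha : R) : R := r / 4 * (alpha - 4 / r).

Definition fhms_disc (r alpha h s : R) : R :=
  1 - 4 * (1 + fhms_mu r h s) * (1 + h) / (r * alpha * fhms_mu r h s).

Definition f_star1 (r alpha h s : R) : R :=
  / (2 * (1 + fhms_mu r h s)) * (1 + sqrt (fhms_disc r alpha h s)).
Definition f_star2 (r alpha h s : R) : R :=
  / (2 * (1 + fhms_mu r h s)) * (1 - sqrt (fhms_disc r alpha h s)).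

(* Main.v *)
Require Import Defs.
From Stdlib Require Import Reals Lra.
Open Scope R_scope.

Lemma eq_of_quad (r alpha h s mu f : R) :
  0 < r -> r < 1 -> 0 < alpha -> s < 1 -> 0 < mu ->
  mu * (r * (1 - s)) = (1 - r) * (1 + h) ->
  r * alpha * mu * (1 + mu) * f * f - r * alpha * mu * f + (1 + h) = 0 ->
  is_equilibrium r alpha h s f (mu * f).
Proof.
  intros hr0 hr1 ha hs1 hmu Hmu Hq.
  unfold is_equilibrium, fhms_df, fhms_dm; split.
  - replace (r * alpha * f * (mu * f) * (1 - f - mu * f) - (1 + h) * f)
      with (- f * (r * alpha * mu * (1 + mu) * f * f - r * alpha * mu * f + (1 + h))) by ring.
    rewrite Hq; ring.
  - assert (H1 : r * alpha * mu * f * (1 - (1+mu) * f) = 1 + h) by nra.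
    assert (H2 : r * ((1 - r) * alpha * f * (1 - (1+mu)*f)) = r * (1 - s)).
    { apply (Rmult_eq_reg_l mu); [|lra].
      replace (mu * (r * ((1 - r) * alpha * f * (1 - (1 + mu) * f))))
        with ((1-r) * (r * alpha * mu * f * (1 - (1+mu) * f))) by ring.
      rewrite H1. lra. }
    apply Rmult_eq_reg_l in H2; [|lra].
    replace ((1 - r) * alpha * f * (mu * f) * (1 - f - mu * f) + (s - 1) * (mu * f))
      with (mu * f * ((1 - r) * alpha * f * (1 - (1+mu)*f) - (1 - s))) by ring.
    rewrite H2; ring.
Qed.

Lemma mu_facts (r h s : R) : 0 < r -> r < 1 -> 0 <= h -> s < 1 ->
  0 < fhms_mu r h s /\ fhms_mu r h s * (r * (1 - s)) = (1 - r) * (1 + h).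
Proof.
  intros. unfold fhms_mu. split.
  - apply Rdiv_lt_0_compat; apply Rmult_lt_0_compat; lra.
  - field. lra.
Qed.

Lemma quad_sol (a k H q f : R) : 0 < a -> 0 < k ->
  q * q = 1 - 4 * k * H / a ->
  (f = / (2 * k) * (1 + q) \/ f = / (2 * k) * (1 - q)) ->
  a * k * f * f - a * f + H = 0.
Proof.
  intros ha hk Hq [-> | ->].
  - transitivity (a / (4 * k) * (q * q - (1 - 4 * k * H / a))); [field; lra|].
    rewrite Hq; ring.
  - transitivity (a / (4 * k) * (q * q - (1 - 4 * k * H / a))); [field; lra|].
    rewrite Hq; ring.
Qed.

Theorem mainTheorem1 (r alpha h s : R)
  (hr0 : 0 < r) (hr1 : r < 1) (ha : 0 < alpha) (hh : 0 <= h)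
  (hs0 : 0 <= s) (hs1 : s < 1) :
  (* every interior equilibrium is one of E_1^*, E_2^* *)
  (forall f m, is_interior_equilibrium r alpha h s f m ->
     0 <= fhms_disc r alpha h s /\
     m = fhms_mu r h s * f /\ (f = f_star1 r alpha h s \/ f = f_star2 r alpha h s)) /\
  (* existence (real and positive) under (i) or (ii) *)
  ((s_star r alpha h <= s /\ h_low r alpha < h /\ h < h_up r alpha) \/
   (h <= h_low r alpha /\ 4 / (r * (1 - r)) < alpha) ->
     0 <= fhms_disc r alpha h s /\
     is_interior_equilibrium r alpha h s (f_star1 r alpha h s) (fhms_mu r h s * f_star1 r alpha h s) /\
     is_interior_equilibrium r alpha h s (f_star2 r alpha h s) (fhms_mu r h s * f_star2 r alpha h s)).
Proof.
  destruct (mu_facts r h s hr0 hr1 hh hs1) as [hmu Hmu].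
  unfold f_star1, f_star2, fhms_disc.
  set (mu := fhms_mu r h s) in *.
  split.
  - intros f m [hf [hm [E1 E2]]].
    unfold fhms_df in E1; unfold fhms_dm in E2.
    assert (A1 : r * alpha * m * (1 - f - m) = 1 + h).
    { apply (Rmult_eq_reg_l f); [|lra]. lra. }
    assert (A2 : (1 - r) * alpha * f * (1 - f - m) = 1 - s).
    { apply (Rmult_eq_reg_l m); [|lra]. lra. }
    assert (Hm : m = mu * f).
    { apply (Rmult_eq_reg_l (r * (1 - s))); [|nra].
      transitivity (r * m * ((1 - r) * alpha * f * (1 - f - m))); [rewrite A2; ring|].
      transitivity ((1 - r) * f * (r * alpha * m * (1 - f - m))); [ring|].
      rewrite A1. replace ((1-r)*f*(1+h)) with (f*((1-r)*(1+h))) by ring.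
      rewrite <- Hmu. ring. }
    subst m.
    set (k := 1 + mu).
    set (c := 2 * k * f - 1).
    assert (Hd : 1 - 4 * k * (1 + h) / (r * alpha * mu) = c * c).
    { unfold c, k. rewrite <- A1. field. split; lra. }
    rewrite Hd.
    split; [nra|]. split; [reflexivity|].
    change (c * c) with (Rsqr c). rewrite sqrt_Rsqr_abs.
    assert (hk : 0 < k) by (unfold k; lra).
    unfold Rabs; destruct (Rcase_abs c) as [Hc|Hc]; [right|left];
      unfold c; field; lra.
  - intros Hc.
    set (d := 1 - 4 * (1 + mu) * (1 + h) / (r * alpha * mu)).
    set (K := (1 - r) * (r * alpha - 4 * (1 + h)) - 4 * r * (1 - s)).
    assert (HK : 0 <= K).
    { unfold K. destruct Hc as [[Hs [Hl Hu]] | [Hl Ha]].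
      - unfold s_star in Hs.
        assert (4 * r * (1 / r + (1 - r) / 4 * (4 * h / r - alpha)) =
                4 + (1 - r) * (4 * h - r * alpha)) by (field; lra).
        assert (4 * r * (1 / r + (1 - r) / 4 * (4 * h / r - alpha)) <= 4 * r * s)
          by (apply Rmult_le_compat_l; lra).
        lra.
      - unfold h_low in Hl.
        assert (4 / r * h <= 4 / r * (r / 4 * (alpha - 4 / (r * (1 - r))))).
        { apply Rmult_le_compat_l; [|exact Hl]. apply Rlt_le, Rdiv_lt_0_compat; lra. }
        assert (4 / r * (r / 4 * (alpha - 4 / (r * (1 - r)))) * (1 - r)
                = (1 - r) * alpha - 4 / r) by (field; lra).
        assert (E : 4 / r * h = 4 * h / r) by (field; lra).
        assert (4 * h / r * (1 - r) <= (1 - r) * alpha - 4 / r) by nra.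
        assert (Ep : 4 * h / r * (1 - r) * r = 4 * h * (1 - r)) by (field; lra).
        assert (Eq : 4 / r * r = 4) by (field; lra).
        nra. }
    assert (Hd1 : d * (r * alpha * mu) = r * alpha * mu - 4 * (1 + mu) * (1 + h)).
    { unfold d. field. split; lra. }
    assert (Hd2 : d * (r * alpha * mu * (r * (1 - s))) = (1 + h) * K).
    { transitivity ((d * (r * alpha * mu)) * (r * (1 - s))); [ring|].
      rewrite Hd1. unfold K.
      transitivity (r * alpha * (mu * (r * (1 - s))) - 4 * (1 + h) * (r * (1 - s))
                    - 4 * (1 + h) * (mu * (r * (1 - s)))); [ring|].
      rewrite Hmu. ring. }
    assert (hpos : 0 < r * alpha * mu * (r * (1 - s))).
    { apply Rmult_lt_0_compat; [|apply Rmult_lt_0_compat; lra].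
      apply Rmult_lt_0_compat; [|exact hmu]. apply Rmult_lt_0_compat; lra. }
    assert (hd : 0 <= d).
    { destruct (Rle_or_lt 0 d) as [|Hn]; [assumption|].
      assert (0 <= (1 + h) * K) by (apply Rmult_le_pos; lra).
      assert (d * (r * alpha * mu * (r * (1 - s))) < 0) by (rewrite <- (Rmult_0_l (r * alpha * mu * (r * (1 - s)))); apply Rmult_lt_compat_r; lra). lra. }
    assert (hd1 : d < 1).
    { assert (0 < 4 * (1 + mu) * (1 + h) / (r * alpha * mu)).
      { apply Rdiv_lt_0_compat.
        - apply Rmult_lt_0_compat; [|lra]. apply Rmult_lt_0_compat; lra.
        - apply Rmult_lt_0_compat; [|exact hmu]. apply Rmult_lt_0_compat; lra. }
      unfold d; lra. }
    assert (hq : sqrt d * sqrt d = d) by (apply sqrt_sqrt; lra).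
    assert (hq0 : 0 <= sqrt d) by apply sqrt_pos.
    assert (hq1 : sqrt d < 1).
    { rewrite <- sqrt_1. apply sqrt_lt_1; lra. }
    assert (hk : 0 < / (2 * (1 + mu))) by (apply Rinv_0_lt_compat; lra).
    assert (Ham : 0 < r * alpha * mu).
    { apply Rmult_lt_0_compat; [|exact hmu]. apply Rmult_lt_0_compat; lra. }
    split; [exact hd|].
    split; (split; [|split; [|apply eq_of_quad; try lra;
                           apply (quad_sol (r * alpha * mu) (1 + mu) (1 + h) (sqrt d)); try lra]]).
    all: try (apply Rmult_lt_0_compat; [lra|]); try (apply Rmult_lt_0_compat; [lra|lra]).
    all: try lra.
    all: exact hq.
Qed.
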